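(* $\mathrm{sat}^*(n,\mathcal N)=\Theta(n)$; that is, there are constants $c_1,c_2>0$ such that $c_1 n\le \mathrm{sat}^*(n,\mathcal N)\le c_2 n$ for all sufficiently large $n$.
   Context: The poset $\mathcal N$ has four elements $a,b,c,d$ with $a<c$, $b<c$, $b<d$ and no other comparabilities. A family $\mathcal Q$ of sets (ordered by inclusion) contains an induced copy of $\mathcal N$ if there are distinct sets in $\mathcal Q$ whose inclusion relations are exactly those of $a,b,c,d$ above. A family $\mathcal F$ of subsets of $[n]=\{1,\dots,n\}$ is $\mathcal N$-saturated if $\mathcal F$ contains no induced copy of $\mathcal N$, but for every $S\subseteq[n]$ with $S\notin\mathcal F$, the family $\mathcal F\cup\{S\}$ contains an induced copy of $\mathcal N$. The induced saturation number $\mathrm{sat}^*(n,\mathcal N)$ is the minimum size of an $\mathcal N$-saturated family of subsets of $[n]$. *)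

(* Defs.v *)
From mathcomp Require Import all_boot all_order all_algebra.
Set Implicit Arguments. Unset Strict Implicit. Unset Printing Implicit Defensive.

Definition comparable_sets (n : nat) (x y : {set 'I_n}) : bool :=
  (x \subset y) || (y \subset x).

Definition is_induced_N (n : nat) (a b c d : {set 'I_n}) : bool :=
  [&& uniq [:: a; b; c; d],
      a \subset c, b \subset c, b \subset d,
      ~~ comparable_sets a b, ~~ comparable_sets a d &
      ~~ comparable_sets c d].

Definition contains_induced_N (n : nat) (F : {set {set 'I_n}}) : bool :=
  [exists a in F, exists b in F, exists c in F, exists d in F,
     is_induced_N a b c d].

Definition N_saturated (n : nat) (F : {set {set 'I_n}}) : bool :=
  ~~ contains_induced_N F &&
  [forall S : {set 'I_n}, (S \notin F) ==> contains_induced_N (S |: F)].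

(* sat^*(n, N): minimum size of an N-saturated family of subsets of [n].
   (The default value 2^n is only used if no saturated family exists,
   which never happens.) *)
Definition sat_star_N (n : nat) : nat :=
  \big[minn/2 ^ 2 ^ n]_(F : {set {set 'I_n}} | N_saturated F) #|F|.

(* Main.v *)
Set Warnings "-notation-overridden,-ambiguous-paths,-notation-incompatible-prefix".
Require Import Defs.
From mathcomp Require Import all_boot all_order all_algebra.
From mathcomp Require Import lra zify.
Import Order.TTheory GRing.Theory Num.Theory.
Set Implicit Arguments. Unset Strict Implicit. Unset Printing Implicit Defensive.

Notation "'inc' A B" := (~~ comparable_sets A B) (at level 10, A at next level, B at next level).

Section Basic.
Variable n : nat.
Implicit Types (A B a b c d S X Y R : {set 'I_n}) (F : {set {set 'I_n}}).


Lemma incC A B : inc A B = inc B A.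
Proof. by rewrite /comparable_sets orbC. Qed.

Lemma incP A B : reflect (~~ (A \subset B) /\ ~~ (B \subset A)) (inc A B).
Proof. by rewrite /comparable_sets negb_or; apply: andP. Qed.

Lemma inc_neq A B : inc A B -> A != B.
Proof. by case/incP=> h _; apply/eqP=> e; rewrite e subxx in h. Qed.

Lemma proper_neq A B : A \proper B -> A != B.
Proof. by move=> h; apply/eqP=> e; rewrite e properxx in h. Qed.

Lemma mkN a b c d : a \proper c -> b \proper c -> b \proper d ->
  inc a b -> inc a d -> inc c d -> is_induced_N a b c d.
Proof.
move=> ac bc bd ab ad cd.
rewrite /is_induced_N ab ad cd (proper_sub ac) (proper_sub bc) (proper_sub bd) !andbT /= !inE !negb_or.
rewrite (inc_neq ab) (proper_neq ac) (inc_neq ad) (proper_neq bc) (proper_neq bd) (inc_neq cd).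
done.
Qed.

Lemma N_props a b c d : is_induced_N a b c d ->
  [/\ a \proper c, b \proper c & b \proper d] /\ [/\ inc a b, inc a d & inc c d].
Proof.
rewrite /is_induced_N => /andP[u /andP[sac /andP[sbc /andP[sbd /andP[iab /andP[iad icd]]]]]]; rewrite iab iad icd.
move: u; rewrite /= !inE !negb_or => /and4P[/and3P[ab ac ad] /andP[bc bd] cd _].
by rewrite !properEneq ac bc bd sac sbc sbd.
Qed.

Lemma contains_intro F a b c d : a \in F -> b \in F -> c \in F -> d \in F ->
  is_induced_N a b c d -> contains_induced_N F.
Proof.
move=> Ha Hb Hc Hd H; apply/existsP; exists a; rewrite Ha /=.
apply/existsP; exists b; rewrite Hb /=.
apply/existsP; exists c; rewrite Hc /=.
by apply/existsP; exists d; rewrite Hd.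
Qed.

Lemma contains_elim F : contains_induced_N F ->
  exists a b c d, [/\ a \in F, b \in F, c \in F, d \in F & is_induced_N a b c d].
Proof.
case/existsP=> a /andP[Ha /existsP[b /andP[Hb /existsP[c /andP[Hc /existsP[d /andP[Hd H]]]]]]].
by exists a, b, c, d.
Qed.

Lemma roles F S : ~~ contains_induced_N F -> contains_induced_N (S |: F) ->
  [\/ exists b c d, [/\ b \in F, c \in F, d \in F & is_induced_N S b c d],
      exists a c d, [/\ a \in F, c \in F, d \in F & is_induced_N a S c d],
      exists a b d, [/\ a \in F, b \in F, d \in F & is_induced_N a b S d] |
      exists a b c, [/\ a \in F, b \in F, c \in F & is_induced_N a b c S]].
Proof.
move=> nF /contains_elim [a [b [c [d [Ha Hb Hc Hd]]]]]; move: Ha Hb Hc Hd.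
case/setU1P=> [->|Ha]; case/setU1P=> [->|Hb]; case/setU1P=> [->|Hc]; case/setU1P=> [->|Hd];
move=> H; have [[p1 p2 p3] [q1 q2 q3]] := N_props H;
rewrite /comparable_sets in q1 q2 q3;
rewrite ?properxx ?subxx ?orbT in p1 p2 p3 q1 q2 q3 => //.
- by constructor 1; exists b, c, d.
- by constructor 2; exists a, c, d.
- by constructor 3; exists a, b, d.
- by constructor 4; exists a, b, c.
- by case/negP: nF; apply: (contains_intro Ha Hb Hc Hd H).
Qed.

Section Repl.
Variables (F : {set {set 'I_n}}) (S Z : {set 'I_n}).
Hypotheses (nF : ~~ contains_induced_N F) (ZF : Z \in F).

Lemma repl_a b c d : b \in F -> c \in F -> d \in F ->
  (forall R, R \in F -> S \proper R -> Z \proper R) ->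
  (forall R, R \in F -> inc R S -> inc R Z) -> is_induced_N S b c d -> False.
Proof.
move=> Hb Hc Hd up ic /N_props [[p1 p2 p3] [q1 q2 q3]].
case/negP: nF; apply: (contains_intro ZF Hb Hc Hd); apply: mkN => //.
- exact: up.
- by rewrite incC; apply: ic => //; rewrite incC.
- by rewrite incC; apply: ic => //; rewrite incC.
Qed.

Lemma repl_b a c d : a \in F -> c \in F -> d \in F ->
  (forall R, R \in F -> S \proper R -> Z \proper R) ->
  (forall R, R \in F -> inc R S -> inc R Z) -> is_induced_N a S c d -> False.
Proof.
move=> Ha Hc Hd up ic /N_props [[p1 p2 p3] [q1 q2 q3]].
case/negP: nF; apply: (contains_intro Ha ZF Hc Hd); apply: mkN => //.
- exact: up.
- exact: up.
- exact: ic.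
Qed.

Lemma repl_c a b d : a \in F -> b \in F -> d \in F ->
  (forall R, R \in F -> R \proper S -> R \proper Z) ->
  (forall R, R \in F -> inc R S -> inc R Z) -> is_induced_N a b S d -> False.
Proof.
move=> Ha Hb Hd dn ic /N_props [[p1 p2 p3] [q1 q2 q3]].
case/negP: nF; apply: (contains_intro Ha Hb ZF Hd); apply: mkN => //.
- exact: dn.
- exact: dn.
- by rewrite incC; apply: ic => //; rewrite incC.
Qed.

Lemma repl_d a b c : a \in F -> b \in F -> c \in F ->
  (forall R, R \in F -> R \proper S -> R \proper Z) ->
  (forall R, R \in F -> inc R S -> inc R Z) -> is_induced_N a b c S -> False.
Proof.
move=> Ha Hb Hc dn ic /N_props [[p1 p2 p3] [q1 q2 q3]].
case/negP: nF; apply: (contains_intro Ha Hb Hc ZF); apply: mkN => //.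
- exact: dn.
- exact: ic.
- exact: ic.
Qed.
End Repl.

End Basic.

Section Witness.
Variable n : nat.
Variables (F : {set {set 'I_n}}) (X Y : {set 'I_n}) (j : 'I_n).
Hypotheses (nF : ~~ contains_induced_N F)
  (satF : forall S, S \notin F -> contains_induced_N (S |: F))
  (XF : X \in F) (YF : Y \in F) (XY : X \subset Y)
  (cov : forall W, W \in F -> X \proper W -> W \proper Y -> False)
  (jY : j \in Y) (jX : j \notin X).

Lemma XpY : X \proper Y.
Proof. by apply/properP; split=> //; exists j. Qed.

Definition Dset := [set R in F | (R \proper Y) && ~~ (R \subset X)].
Definition Uset := [set R in F | (X \proper R) && ~~ (Y \subset R)].

Lemma step1 R U : R \in Dset -> U \in Uset -> R \subset U.
Proof.
rewrite !inE => /and3P[RF RY RX] /and3P[UF XU YU].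
apply/negPn/negP => nRU; case/negP: nF.
apply: (contains_intro RF XF YF UF); apply: mkN => //.
- exact: XpY.
- apply/incP; split=> //; apply/negP=> XR.
  by apply: (cov RF) => //; rewrite properE XR.
- apply/incP; split=> //; apply/negP=> UR.
  by apply: (cov UF XU); apply: sub_proper_trans UR RY.
- apply/incP; split=> //; apply/negP=> UY.
  by apply: (cov UF XU); rewrite properE UY.
Qed.

Lemma step2 : Dset = set0 \/ Uset = set0.
Proof.
case: (set_0Vmem Dset) => [->|[R0 R0D]]; first by left.
case: (set_0Vmem Uset) => [->|[U0 U0U]]; first by right.
exfalso.
pose S := X :|: \bigcup_(R in Dset) R.
have XS : X \subset S by apply: subsetUl.
have DS R : R \in Dset -> R \subset S.
  by move=> RD; apply: subset_trans (subsetUr _ _); apply: bigcup_sup.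
have SY : S \subset Y.
  rewrite subUset XY /=; apply/bigcupsP=> R; rewrite inE => /and3P[_ /proper_sub //].
have SU U : U \in Uset -> S \subset U.
  move=> UU; rewrite subUset; apply/andP; split.
    by move: UU; rewrite inE => /and3P[_ /proper_sub].
  by apply/bigcupsP=> R RD; apply: step1.
have SX : ~~ (S \subset X).
  apply/negP=> SX; move: (R0D); rewrite inE => /and3P[_ _ /negP]; apply.
  exact: subset_trans (DS _ R0D) SX.
have YS : ~~ (Y \subset S).
  apply/negP=> YS; move: (U0U); rewrite inE => /and3P[_ _ /negP]; apply.
  exact: subset_trans YS (SU _ U0U).
have SF : S \notin F.
  by apply/negP=> SF; apply: (cov SF); rewrite properE ?XS ?SY.
have F3 R : R \in F -> inc R S -> inc R Y.
  move=> RF /incP[RS SR]; apply/incP; split; apply/negP=> h.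
  - case: (boolP (R \subset X)) => RX; first by case/negP: RS; apply: subset_trans RX XS.
    case: (boolP (Y \subset R)) => YR.
      by case/negP: SR; apply: subset_trans SY YR.
    by case/negP: RS; apply: DS; rewrite inE RF RX properE h YR.
  - by case/negP: SR; apply: subset_trans SY h.
have F4 R : R \in F -> inc R S -> inc R X.
  move=> RF /incP[RS SR]; apply/incP; split; apply/negP=> h.
  - by case/negP: RS; apply: subset_trans h XS.
  - case: (boolP (R \subset X)) => RX; first by case/negP: RS; apply: subset_trans RX XS.
    case: (boolP (Y \subset R)) => YR.
      by case/negP: SR; apply: subset_trans SY YR.
    by case/negP: SR; apply: SU; rewrite inE RF YR properE h RX.
have dn R : R \in F -> R \proper S -> R \proper Y.
  by move=> _ h; apply: proper_sub_trans h SY.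
have up R : R \in F -> S \proper R -> X \proper R.
  by move=> _ h; apply: sub_proper_trans XS h.
case: (roles nF (satF SF)).
- by move=> [b [c [d [Hb Hc Hd H]]]]; apply: (repl_a nF XF Hb Hc Hd up F4 H).
- by move=> [a [c [d [Ha Hc Hd H]]]]; apply: (repl_b nF XF Ha Hc Hd up F4 H).
- by move=> [a [b [d [Ha Hb Hd H]]]]; apply: (repl_c nF YF Ha Hb Hd dn F3 H).
- by move=> [a [b [c [Ha Hb Hc H]]]]; apply: (repl_d nF YF Ha Hb Hc dn F3 H).
Qed.

Lemma lowerW : Uset = set0 -> ~~ (Y :\ j \subset X) ->
  exists2 R, R \in F & (j \in R) && (R :\ j \subset X).
Proof.
move=> U0 hYX.
have U0' R : R \in F -> X \proper R -> Y \subset R.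
  move=> RF XR; apply/negPn/negP=> YR.
  by have := in_set0 R; rewrite -U0 inE RF XR YR.
case: (boolP [exists R in F, (j \in R) && (R :\ j \subset X)]).
  by case/exists_inP=> R RF h; exists R.
move/exists_inPn=> nW; exfalso.
pose S := j |: X.
have XS : X \subset S by apply: subsetUr.
have SX : ~~ (S \subset X) by apply/subsetPn; exists j; rewrite ?setU11.
have SY : S \subset Y by rewrite subUset sub1set jY XY.
have YS : ~~ (Y \subset S).
  apply/negP=> YS; case/negP: hYX; apply/subsetP=> y /setD1P[yj yY].
  by move/subsetP: YS => /(_ y yY); rewrite !inE (negbTE yj).
have SF : S \notin F.
  by apply/negP=> SF; apply: (cov SF); rewrite properE ?XS ?SY.
have G1 R : R \in F -> R \subset S -> R \subset X.
  move=> RF RS; case: (boolP (j \in R)) => jR.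
    have := nW R RF; rewrite jR /=; case/negP.
    apply/subsetP=> y /setD1P[yj yR].
    by move/subsetP: RS => /(_ y yR); rewrite !inE (negbTE yj).
  apply/subsetP=> y yR; move/subsetP: RS => /(_ y yR); rewrite !inE.
  by case/orP=> // /eqP ey; move: yR; rewrite ey (negbTE jR).
have G3 R : R \in F -> inc R S -> inc R X.
  move=> RF /incP[RS SR]; apply/incP; split; apply/negP=> h.
  - by case/negP: RS; apply: subset_trans h XS.
  - case: (boolP (R \subset X)) => RX; first by case/negP: RS; apply: subset_trans RX XS.
    by case/negP: SR; apply: subset_trans SY (U0' R RF _); rewrite properE h RX.
have up R : R \in F -> S \proper R -> X \proper R.
  by move=> _ h; apply: sub_proper_trans XS h.
case: (roles nF (satF SF)).
- by move=> [b [c [d [Hb Hc Hd H]]]]; apply: (repl_a nF XF Hb Hc Hd up G3 H).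
- by move=> [a [c [d [Ha Hc Hd H]]]]; apply: (repl_b nF XF Ha Hc Hd up G3 H).
- move=> [a [b [d [Ha Hb Hd H]]]].
  have [[p1 p2 p3] [q1 q2 q3]] := N_props H.
  have aX := G1 a Ha (proper_sub p1).
  have bX := G1 b Hb (proper_sub p2).
  case/negP: nF; apply: (contains_intro Ha Hb XF Hd); apply: mkN => //.
  + rewrite properE aX; apply/negP=> Xa; case/incP: q1 => _ /negP; apply.
    exact: subset_trans bX Xa.
  + rewrite properE bX; apply/negP=> Xb; case/incP: q1 => /negP nab _; apply: nab.
    exact: subset_trans aX Xb.
  + by rewrite incC; apply: G3 => //; rewrite incC.
- move=> [a [b [c [Ha Hb Hc H]]]].
  have [[p1 p2 p3] [q1 q2 q3]] := N_props H.
  have bX := G1 b Hb (proper_sub p3).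
  have bpX : b \proper X.
    rewrite properE bX; apply/negP=> Xb.
    have Yc := U0' c Hc (sub_proper_trans Xb p2).
    by case/incP: q3 => _ /negP; apply; apply: subset_trans SY Yc.
  case/negP: nF; apply: (contains_intro Ha Hb Hc XF); apply: mkN => //.
  + exact: G3.
  + exact: G3.
Qed.

Lemma upperW : Dset = set0 -> ~~ (Y :\ j \subset X) ->
  exists2 R, R \in F & (j \notin R) && (Y :\ j \subset R).
Proof.
move=> D0 hYX.
have D0' R : R \in F -> R \proper Y -> R \subset X.
  move=> RF RY; apply/negPn/negP=> RX.
  by have := in_set0 R; rewrite -D0 inE RF RY RX.
case: (boolP [exists R in F, (j \notin R) && (Y :\ j \subset R)]).
  by case/exists_inP=> R RF h; exists R.
move/exists_inPn=> nW; exfalso.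
pose S := Y :\ j.
have XS : X \subset S.
  apply/subsetP=> x xX; rewrite !inE (subsetP XY x xX) andbT.
  by apply/eqP=> e; move: jX; rewrite -e xX.
have SY : S \subset Y by apply: subD1set.
have YS : ~~ (Y \subset S) by apply/subsetPn; exists j; rewrite ?inE ?eqxx.
have SF : S \notin F.
  by apply/negP=> SF; apply: (cov SF); rewrite properE ?XS ?SY.
have H1 R : R \in F -> S \subset R -> Y \subset R.
  move=> RF SR; case: (boolP (j \in R)) => jR.
    by rewrite -(setD1K jY) subUset sub1set jR.
  by have := nW R RF; rewrite jR SR.
have H3 R : R \in F -> inc R S -> inc R Y.
  move=> RF /incP[RS SR]; apply/incP; split; apply/negP=> h.
  - case: (boolP (Y \subset R)) => YR; first by case/negP: SR; apply: subset_trans SY YR.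
    case/negP: RS; apply: subset_trans XS; apply: D0' => //.
    by rewrite properE h YR.
  - by case/negP: SR; apply: subset_trans SY h.
have dn R : R \in F -> R \proper S -> R \proper Y.
  by move=> _ h; apply: proper_sub_trans h SY.
case: (roles nF (satF SF)).
- move=> [b [c [d [Hb Hc Hd H]]]].
  have [[p1 p2 p3] [q1 q2 q3]] := N_props H.
  have Yc := H1 c Hc (proper_sub p1).
  have Ypc : Y \proper c.
    rewrite properE Yc; apply/negP=> cY.
    have bX := D0' b Hb (proper_sub_trans p2 cY).
    by case/incP: q1 => _ /negP; apply; apply: subset_trans bX XS.
  case/negP: nF; apply: (contains_intro YF Hb Hc Hd); apply: mkN => //.
  + by rewrite incC; apply: H3 => //; rewrite incC.
  + by rewrite incC; apply: H3 => //; rewrite incC.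
- move=> [a [c [d [Ha Hc Hd H]]]].
  have [[p1 p2 p3] [q1 q2 q3]] := N_props H.
  have Yc := H1 c Hc (proper_sub p2).
  have Yd := H1 d Hd (proper_sub p3).
  case/negP: nF; apply: (contains_intro Ha YF Hc Hd); apply: mkN => //.
  + rewrite properE Yc; apply/negP=> cY; case/incP: q3 => /negP nab _; apply: nab.
    exact: subset_trans cY Yd.
  + rewrite properE Yd; apply/negP=> dY; case/incP: q3 => _ /negP; apply.
    exact: subset_trans dY Yc.
  + exact: H3.
- by move=> [a [b [d [Ha Hb Hd H]]]]; apply: (repl_c nF YF Ha Hb Hd dn H3 H).
- by move=> [a [b [c [Ha Hb Hc H]]]]; apply: (repl_d nF YF Ha Hb Hc dn H3 H).
Qed.

Lemma witness : exists2 R, R \in F &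
  ((j \in R) && (R :\ j \subset X)) || ((j \notin R) && (Y :\ j \subset R)).
Proof.
case: (boolP (Y :\ j \subset X)) => hYX.
  by exists Y => //; rewrite jY hYX.
case: step2 => h.
- by have [R RF HR] := upperW h hYX; exists R => //; rewrite HR orbT.
- by have [R RF HR] := lowerW h hYX; exists R => //; rewrite HR.
Qed.

End Witness.

Section Count.
Variable n : nat.
Variable F : {set {set 'I_n}}.
Hypothesis satF0 : N_saturated F.

Lemma nF : ~~ contains_induced_N F.
Proof. by case/andP: satF0. Qed.

Lemma satF S : S \notin F -> contains_induced_N (S |: F).
Proof. by case/andP: satF0 => _ /forallP /(_ S) /implyP. Qed.

Lemma compC (A B : {set 'I_n}) : comparable_sets A B = comparable_sets B A.
Proof. by rewrite /comparable_sets orbC. Qed.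

Lemma set0_in : set0 \in F.
Proof.
apply/negPn/negP=> h; case: (roles nF (satF h)).
- by move=> [b [c [d [_ _ _ /N_props[_ [q _ _]]]]]]; rewrite /comparable_sets sub0set in q.
- by move=> [a [c [d [_ _ _ /N_props[_ [q _ _]]]]]]; rewrite /comparable_sets sub0set orbT in q.
- by move=> [a [b [d [_ _ _ /N_props[[p _ _] _]]]]]; move: p; rewrite properE sub0set andbF.
- by move=> [a [b [c [_ _ _ /N_props[[_ _ p] _]]]]]; move: p; rewrite properE sub0set andbF.
Qed.

Lemma setT_in : setT \in F.
Proof.
apply/negPn/negP=> h; case: (roles nF (satF h)).
- by move=> [b [c [d [_ _ _ /N_props[[p _ _] _]]]]]; move: p; rewrite properE subsetT andbF.
- by move=> [a [c [d [_ _ _ /N_props[[_ p _] _]]]]]; move: p; rewrite properE subsetT andbF.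
- by move=> [a [b [d [_ _ _ /N_props[_ [_ _ q]]]]]]; rewrite /comparable_sets subsetT orbT in q.
- by move=> [a [b [c [_ _ _ /N_props[_ [_ q _]]]]]]; rewrite /comparable_sets subsetT in q.
Qed.

Definition is_chain (C : {set {set 'I_n}}) :=
  [forall A in C, forall B in C, comparable_sets A B].

Lemma chainP C A B : is_chain C -> A \in C -> B \in C -> comparable_sets A B.
Proof. by move/forall_inP=> h /h /forall_inP; apply. Qed.

Definition PC (C : {set {set 'I_n}}) := (C \subset F) && is_chain C.

Lemma PC0 : PC set0.
Proof. by rewrite /PC sub0set; apply/forall_inP=> A; rewrite inE. Qed.

Lemma lower_bound : n <= 2 * #|F|.
Proof.
case: (@arg_maxnP _ set0 PC (fun C => #|C|) PC0) => C /andP[CF Cch] Cmax.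
have extend W : W \in F -> W \notin C -> (forall Z, Z \in C -> comparable_sets W Z) -> False.
  move=> WF WC hW.
  have : PC (W |: C).
    rewrite /PC subUset sub1set WF CF /=.
    apply/forall_inP=> A /setU1P[->|HA]; apply/forall_inP=> B /setU1P[->|HB].
    - by rewrite /comparable_sets subxx.
    - exact: hW.
    - by rewrite compC; apply: hW.
    - exact: chainP Cch HA HB.
  by move/Cmax; rewrite cardsU1 WC /= add1n ltnn.
have C0 : set0 \in C.
  apply/negPn/negP=> h; apply: (extend _ set0_in h) => Z _.
  by rewrite /comparable_sets sub0set.
have CT : setT \in C.
  apply/negPn/negP=> h; apply: (extend _ setT_in h) => Z _.
  by rewrite /comparable_sets subsetT orbT.
pose Xf (j : 'I_n) := [arg max_(Z > set0 | (Z \in C) && (j \notin Z)) #|Z|].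
pose Yf (j : 'I_n) := [arg min_(Z < setT | (Z \in C) && (j \in Z)) #|Z|].
have XP j : [/\ Xf j \in C, j \notin Xf j &
    forall Z, Z \in C -> j \notin Z -> Z \subset Xf j].
  rewrite /Xf; case: arg_maxnP; first by rewrite C0 inE.
  move=> X /andP[XC jX] Xm; split=> // Z ZC jZ.
  case/orP: (chainP Cch ZC XC) => // XZ.
  case: (boolP (Z \subset X)) => // nZX.
  have := Xm Z; rewrite ZC jZ => /(_ isT) /=.
  by rewrite leqNgt proper_card // properE XZ.
have YP j : [/\ Yf j \in C, j \in Yf j &
    forall Z, Z \in C -> j \in Z -> Yf j \subset Z].
  rewrite /Yf; case: arg_minnP; first by rewrite CT inE.
  move=> Y /andP[YC jY] Ym; split=> // Z ZC jZ.
  case/orP: (chainP Cch YC ZC) => // ZY.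
  case: (boolP (Y \subset Z)) => // nYZ.
  have := Ym Z; rewrite ZC jZ => /(_ isT) /=.
  by rewrite leqNgt proper_card // properE ZY.
pose wit (j : 'I_n) (R : {set 'I_n}) :=
  ((j \in R) && (R :\ j \subset Xf j)) || ((j \notin R) && (Yf j :\ j \subset R)).
have Wex j : exists2 R, R \in F & wit j R.
  have [XC jX Xm] := XP j; have [YC jY Ym] := YP j.
  have XY : Xf j \subset Yf j.
    case/orP: (chainP Cch XC YC) => // YX.
    by move: jX; rewrite (subsetP YX j jY).
  apply: (witness nF satF (subsetP CF _ XC) (subsetP CF _ YC) XY _ jY jX).
  move=> W WF XW WY; apply: (extend W WF).
  - apply/negP=> WC; case: (boolP (j \in W)) => jW.
      by have := Ym W WC jW; rewrite properE in WY; case/andP: WY => _ /negP.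
    by have := Xm W WC jW; rewrite properE in XW; case/andP: XW => _ /negP.
  - move=> Z ZC; rewrite /comparable_sets; case: (boolP (j \in Z)) => jZ.
      by rewrite (subset_trans (proper_sub WY) (Ym Z ZC jZ)).
    by rewrite (subset_trans (Xm Z ZC jZ) (proper_sub XW)) orbT.
pose f (j : 'I_n) := odflt set0 [pick R in F | wit j R].
have fP j : (f j \in F) && wit j (f j).
  rewrite /f; case: pickP => [R /andP[RF W]|none] /=; first by rewrite RF W.
  by have [R RF W] := Wex j; have := none R; rewrite RF W.
pose g (j : 'I_n) := (f j, (j \in f j) && (f j :\ j \subset Xf j)).
have ginj : injective g.
  move=> j1 j2 [e b]; apply/eqP; apply/negP=> /negP ne.
  have /andP[_ W1] := fP j1; have /andP[_ W2] := fP j2.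
  move: b W1 W2; rewrite /wit -e; set R := f j1.
  have [X1C jX1 _] := XP j1; have [X2C jX2 _] := XP j2.
  have [Y1C jY1 _] := YP j1; have [Y2C jY2 _] := YP j2.
  case: ((j1 \in R) && (R :\ j1 \subset Xf j1)) / andP => [[j1R s1]|n1] /=.
    move=> /esym/andP[j2R s2] _ _.
    have j2X1 : j2 \in Xf j1 by apply: (subsetP s1); rewrite !inE j2R eq_sym ne.
    have j1X2 : j1 \in Xf j2 by apply: (subsetP s2); rewrite !inE j1R ne.
    case/orP: (chainP Cch X1C X2C) => h.
      by move: jX2; rewrite (subsetP h _ j2X1).
    by move: jX1; rewrite (subsetP h _ j1X2).
  move=> b /andP[j1R s1]; rewrite -b /= => /andP[j2R s2].
  have j1Y2 : j1 \notin Yf j2.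
    apply/negP=> h; move: j1R; rewrite (subsetP s2) //.
    by rewrite !inE h ne.
  have j2Y1 : j2 \notin Yf j1.
    apply/negP=> h; move: j2R; rewrite (subsetP s1) //.
    by rewrite !inE h eq_sym ne.
  case/orP: (chainP Cch Y1C Y2C) => h.
    by move: j1Y2; rewrite (subsetP h _ jY1).
  by move: j2Y1; rewrite (subsetP h _ jY2).
have : #|g @: [set: 'I_n]| <= #|setX F [set: bool]|.
  apply: subset_leq_card; apply/subsetP=> p /imsetP[j _ ->].
  by rewrite in_setX /= in_setT andbT; case/andP: (fP j).
by rewrite card_imset // cardsT card_ord cardsX cardsT card_bool mulnC.
Qed.

End Count.

Section Constr.
Variable n : nat.

Definition pre (k : nat) : {set 'I_n} := [set i : 'I_n | i < k].
Definition F0 : {set {set 'I_n}} :=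
  [set pre k | k : 'I_n.+1] :|: [set [set i] | i : 'I_n].

Lemma pre_in k : k <= n -> pre k \in F0.
Proof.
move=> kn; apply/setUP; left; apply/imsetP; exists (inord k) => //.
by rewrite inordK.
Qed.

Lemma set1_in i : [set i] \in F0.
Proof. by apply/setUP; right; apply/imsetP; exists i. Qed.

Lemma F0P A : A \in F0 -> (exists k, A = pre k) \/ (exists i, A = [set i]).
Proof.
case/setUP=> /imsetP[k _ ->]; first by left; exists k.
by right; exists k.
Qed.

Lemma pre_sub k l : k <= l -> pre k \subset pre l.
Proof. by move=> kl; apply/subsetP=> i; rewrite !inE => /leq_trans; apply. Qed.

Lemma pre_comp k l : comparable_sets (pre k) (pre l).
Proof.
rewrite /comparable_sets; case: (leqP k l) => h; first by rewrite (pre_sub h).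
by rewrite (pre_sub (ltnW h)) orbT.
Qed.

Lemma F0_free : ~~ contains_induced_N F0.
Proof.
apply/negP => /contains_elim [a [b [c [d [Ha Hb Hc Hd H]]]]].
have [[ac bc bd] [iab iad icd]] := N_props H.
have b0 : b != set0.
  apply/eqP=> e; move: iab; rewrite e /comparable_sets sub0set orbT.
  by [].
have isPre Z : Z \in F0 -> b \proper Z -> exists k, Z = pre k.
  move=> ZF bZ; case: (F0P ZF) => // [[i e]].
  move: bZ; rewrite e properE subset1 => /andP[/orP[/eqP eb|/eqP eb] nib].
    by rewrite eb subxx in nib.
  by rewrite eb eqxx in b0.
have [k1 e1] := isPre c Hc bc.
have [k2 e2] := isPre d Hd bd.
by move: icd; rewrite e1 e2 pre_comp.
Qed.

Lemma F0_sat S : S \notin F0 -> contains_induced_N (S |: F0).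
Proof.
move=> SF.
have Spre k : k <= n -> S != pre k.
  by move=> kn; apply/eqP=> e; rewrite e pre_in in SF.
have S1 i : S != [set i].
  by apply/eqP=> e; rewrite e set1_in in SF.
have preT : pre n = setT by apply/setP=> i; rewrite !inE ltn_ord.
have : ~~ (setT \subset S).
  apply/negP=> h; have := Spre n (leqnn n); rewrite preT.
  by rewrite eqEsubset subsetT h.
case/subsetPn=> x0 _ x0S.
case: (@arg_minnP _ x0 (fun x => x \notin S) val x0S) => k0 k0S k0m.
have preS : pre k0 \subset S.
  apply/subsetP=> x; rewrite inE => xk; apply/negPn/negP=> xS.
  by have := k0m x xS; rewrite leqNgt xk.
have : ~~ (S \subset pre k0).
  apply/negP=> h; have := Spre k0 (ltnW (ltn_ord k0)).
  by rewrite eqEsubset h preS.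
case/subsetPn=> j jS; rewrite inE -leqNgt => k0j.
have k0ltj : k0 < j.
  rewrite ltn_neqAle k0j andbT; apply/negP=> /eqP e.
  by move: jS; rewrite -(val_inj e) (negbTE k0S).
have S0 : S != set0.
  by apply/eqP=> e; rewrite e in jS; rewrite inE in jS.
have inS A : A \in F0 -> A \in S |: F0 by move=> h; apply: setU1r.
have SinS : S \in S |: F0 by apply: setU11.
have nSsub1 i : ~~ (S \subset [set i]) by rewrite subset1 negb_or S1 S0.
have n0 : 0 < n by apply: leq_ltn_trans (leq0n _) (ltn_ord k0).
case: (posnP k0) => [k00|k0pos].
-
  case: (@arg_minnP _ j (fun x => x \in S) val jS) => m mS mm.
  have mk0 : m != k0 by apply/negP=> /eqP e; rewrite e (negbTE k0S) in mS.
  have k0pre : k0 \in pre m.+1 by rewrite inE k00.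
  have mpre : m \in pre m.+1 by rewrite inE ltnSn.
  apply: (contains_intro (inS _ (set1_in k0)) (inS _ (set1_in m))
            (inS _ (pre_in (ltn_ord m))) SinS).
  apply: mkN.
  + rewrite properE sub1set k0pre subset1 negb_or /=; apply/andP; split.
      by apply/eqP=> /setP /(_ m); rewrite !inE ltnSn (negbTE mk0).
    by apply/eqP=> /setP /(_ m); rewrite !inE ltnSn.
  + rewrite properE sub1set mpre subset1 negb_or /=; apply/andP; split.
      by apply/eqP=> /setP /(_ k0); rewrite !inE k00 eq_sym (negbTE mk0).
    by apply/eqP=> /setP /(_ m); rewrite !inE ltnSn.
  + by rewrite properE sub1set mS nSsub1.
  + by rewrite /comparable_sets !sub1set !inE eq_sym (negbTE mk0).
  + by rewrite /comparable_sets sub1set (negbTE k0S) nSsub1.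
  + rewrite /comparable_sets negb_or; apply/andP; split.
      by apply/negP=> /subsetP /(_ k0 k0pre); rewrite (negbTE k0S).
    apply/negP=> h; case/negP: (nSsub1 m); apply/subsetP=> x xS.
    have := subsetP h x xS; rewrite !inE ltnS => xm.
    by apply/eqP; apply: val_inj; apply/eqP; rewrite eqn_leq xm mm.
-
  pose i0 : 'I_n := Ordinal n0.
  have i0j : i0 != j.
    by apply/negP=> /eqP e; move: k0ltj; rewrite -e /= ltn0.
  have i0pre : i0 \in pre k0 by rewrite inE.
  have i0pre1 : i0 \in pre k0.+1 by rewrite inE.
  have jpre1 : j \notin pre k0.+1 by rewrite inE ltnS -ltnNge.
  have jpre : j \notin pre k0 by rewrite inE -leqNgt.
  apply: (contains_intro (inS _ (set1_in j)) (inS _ (pre_in (ltnW (ltn_ord k0))))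
            SinS (inS _ (pre_in (ltn_ord k0)))).
  apply: mkN.
  + by rewrite properE sub1set jS nSsub1.
  + rewrite properE preS; apply/negP=> /subsetP /(_ j jS).
    by rewrite (negbTE jpre).
  + rewrite properE pre_sub ?leqnSn //; apply/negP=> /subsetP /(_ k0).
    by rewrite !inE ltnSn ltnn => /(_ isT).
  + rewrite /comparable_sets sub1set (negbTE jpre) /=.
    by apply/negP=> /subsetP /(_ i0 i0pre); rewrite inE (negbTE i0j).
  + rewrite /comparable_sets sub1set (negbTE jpre1) /=.
    by apply/negP=> /subsetP /(_ i0 i0pre1); rewrite inE (negbTE i0j).
  + rewrite /comparable_sets negb_or; apply/andP; split.
      by apply/negP=> /subsetP /(_ j jS); rewrite (negbTE jpre1).
    by apply/negP=> /subsetP /(_ k0); rewrite !inE ltnSn (negbTE k0S) => /(_ isT).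
Qed.

Lemma F0_saturated : N_saturated F0.
Proof.
rewrite /N_saturated F0_free /=; apply/forallP=> S; apply/implyP; exact: F0_sat.
Qed.

Lemma F0_card : #|F0| <= n.+1 + n.
Proof.
rewrite /F0 cardsU; apply: leq_trans (leq_subr _ _) _.
apply: leq_add.
  by apply: leq_trans (leq_imset_card _ _) _; rewrite ?cardsT ?cardT ?card_ord ?size_enum_ord.
by apply: leq_trans (leq_imset_card _ _) _; rewrite ?cardsT ?cardT ?card_ord ?size_enum_ord.
Qed.

End Constr.

Lemma bigmin_le (I : finType) (P : pred I) (G : I -> nat) x0 i :
  P i -> \big[minn/x0]_(j | P j) G j <= G i.
Proof.
move=> Pi; have : i \in index_enum I by rewrite mem_index_enum.
elim: (index_enum I) => [|x r IH]; first by rewrite in_nil.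
rewrite inE big_cons => /orP[/eqP <-|ir]; first by rewrite Pi geq_minl.
case: (P x); last exact: IH.
exact: leq_trans (geq_minr _ _) (IH ir).
Qed.

Lemma sat_lower n : n <= 2 * sat_star_N n.
Proof.
rewrite /sat_star_N; apply: (big_ind (fun x => n <= 2 * x)).
- apply: leq_trans (ltnW (ltn_expl n (ltnSn 1))) _.
  apply: leq_trans (leq_pexp2l (isT : 0 < 2) (ltnW (ltn_expl n (ltnSn 1)))) _.
  by rewrite leq_pmull.
- by move=> x y hx hy; rewrite /minn; case: ifP.
- by move=> F; apply: lower_bound.
Qed.

Lemma sat_upper n : 0 < n -> sat_star_N n <= 3 * n.
Proof.
move=> n0; apply: leq_trans (bigmin_le _ _ (F0_saturated n)) _.
apply: leq_trans (F0_card n) _.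
by lia.
Qed.

Local Open Scope ring_scope.

Theorem theorem4p3 :
  exists (c1 c2 : rat) (N0 : nat),
    0 < c1 /\ 0 < c2 /\
    forall n : nat, (N0 <= n)%N ->
      c1 * n%:R <= (sat_star_N n)%:R /\ (sat_star_N n)%:R <= c2 * n%:R.
Proof.
exists (1/2), 3, 1%N; split; first by [].
split; first by [].
move=> n n1; split.
- have h : (n%:R : rat) <= 2 * (sat_star_N n)%:R.
    by rewrite -natrM ler_nat sat_lower.
  lra.
- by rewrite -natrM ler_nat sat_upper.
Qed.
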